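(* Let $G=(\Gamma,s)$ be a connected rooted graph. If $s$ is not a cut vertex of $G$ (i.e. the graph obtained by deleting $s$ and its incident edges is connected), then the constant function $\mathbf 1:\tilde V\to\mathbb{N}$, $v\mapsto 1$, belongs to $\mathrm{PPF}(G)$. If $s$ is a cut vertex of $G$, then $\mathrm{PPF}(G)=\emptyset$.
   Context: $\mathbb{N}=\{1,2,\dots\}$. A rooted graph $G=(\Gamma,s)$ is a finite undirected multigraph without loops with a distinguished vertex $s$ (the sink); $V$ is its vertex set and $\tilde V=V\setminus\{s\}$. $\mathrm{mult}(vw)$ is the number of edges between $v,w$; for $A\subseteq V$, $\deg^A(v)=\sum_{w\in A}\mathrm{mult}(vw)$ and $\deg(v)=\deg^V(v)$. A $G$-parking function is a function $p:\tilde V\to\mathbb{N}$ such that for every nonempty $S\subseteq\tilde V$ there exists $v\in S$ with $p(v)\le\deg^{V\setminus S}(v)$; $\mathrm{PF}(G)$ is their set. For $A\subseteq\tilde V$, $G^A$ denotes the induced subgraph of $G$ on $A\cup\{s\}$, rooted at $s$ (possibly disconnected; the definition of $G^A$-parking function is the same). For an ordered pair $(A,B)$ of nonempty disjoint sets with $A\cup B=\tilde V$ and $p\in\mathrm{PF}(G)$, define $p^A:A\to\mathbb{N}$, $p^A(v)=p(v)$, and $p^B:B\to\mathbb{Z}$, $p^B(v)=p(v)-\deg^A(v)$. $p$ is decomposable with respect to $(A,B)$ if $p^A\in\mathrm{PF}(G^A)$ and $p^B\in\mathrm{PF}(G^B)$. $p\in\mathrm{PF}(G)$ is prime if there is no such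 $(A,B)$ with respect to which $p$ is decomposable; $\mathrm{PPF}(G)$ is the set of prime $G$-parking functions. *)

(* Defs.v *)
From HB Require Import structures.
From mathcomp Require Import all_boot all_order all_algebra.
Set Implicit Arguments. Unset Strict Implicit. Unset Printing Implicit Defensive.
Import Order.TTheory GRing.Theory Num.Theory.
Local Open Scope ring_scope.

(* A finite loopless multigraph on the finite vertex type V is given by a
   multiplicity function mult : V -> V -> nat which is symmetric and has
   zero diagonal. *)
Definition is_multigraph (V : finType) (mult : V -> V -> nat) : Prop :=
  (forall v w, mult v w = mult w v) /\ (forall v, mult v v = 0%N).

Definition deg_to (V : finType) (mult : V -> V -> nat) (X : {set V}) (v : V) : nat :=
  (\sum_(w in X) mult v w)%N.

Definition adj (V : finType) (mult : V -> V -> nat) : rel V :=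
  fun x y => (0 < mult x y)%N.

Definition connected_graph (V : finType) (mult : V -> V -> nat) : Prop :=
  forall u v : V, connect (adj mult) u v.

Definition connected_without (V : finType) (mult : V -> V -> nat) (s : V) : Prop :=
  forall u v : V, u != s -> v != s ->
    connect (fun x y => [&& x != s, y != s & adj mult x y]) u v.

(* p is a parking function of the induced rooted graph G^A (vertex set
   A ∪ {s}, sink s), where A ⊆ V \ {s}.  Only the values of p on A matter.
   Values are taken in int so that p^B (which is Z-valued a priori) fits;
   membership in PF requires values in N = {1,2,...}. *)
Definition is_PF (V : finType) (mult : V -> V -> nat) (s : V)
    (A : {set V}) (p : V -> int) : Prop :=
  (forall v, v \in A -> 1 <= p v) /\
  (forall S : {set V}, S \subset A -> S != set0 ->
     exists2 v, v \in S & p v <= (deg_to mult ((s |: A) :\: S) v)%:Z).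

Definition Vt (V : finType) (s : V) : {set V} := ~: [set s].

Definition decomposable (V : finType) (mult : V -> V -> nat) (s : V)
    (p : V -> int) (A B : {set V}) : Prop :=
  [/\ A != set0, B != set0, [disjoint A & B] && (A :|: B == Vt s),
      is_PF mult s A p &
      is_PF mult s B (fun v => p v - (deg_to mult A v)%:Z)].

Definition is_PPF (V : finType) (mult : V -> V -> nat) (s : V) (p : V -> int) : Prop :=
  is_PF mult s (Vt s) p /\
  ~ (exists A B : {set V}, decomposable mult s p A B).

(* Main.v *)
Require Import Defs.
From mathcomp Require Import all_boot all_order all_algebra.
From mathcomp Require Import zify.
Import Order.TTheory GRing.Theory Num.Theory.
Local Open Scope ring_scope.

Lemma cross (T : finType) (r : rel T) (S : {set T}) x y :
  connect r x y -> x \in S -> y \notin S ->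
  exists a b, [/\ a \in S, b \notin S & r a b].
Proof.
move/connectP=> [p Hp ->]; elim: p x Hp => [|z p IH] x /=.
  by move=> _ H1 H2; rewrite H1 in H2.
move/andP=> [rxz Hp] xS lS.
case zS: (z \in S); first exact: IH Hp zS lS.
by exists x, z; rewrite zS.
Qed.

Lemma deg_eq (V : finType) (mult : V -> V -> nat) (X Y : {set V}) v :
  (forall w, (w \in X) != (w \in Y) -> mult v w = 0%N) ->
  deg_to mult X v = deg_to mult Y v.
Proof.
move=> H; rewrite /deg_to [LHS]big_mkcond [RHS]big_mkcond; apply: eq_bigr => w _.
case wX: (w \in X); case wY: (w \in Y) => //; rewrite H // wX wY //.
Qed.

Lemma deg_ge (V : finType) (mult : V -> V -> nat) (X : {set V}) v w :
  w \in X -> (mult v w <= deg_to mult X v)%N.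
Proof. by move=> wX; rewrite /deg_to (bigD1 w) //= leq_addr. Qed.

Lemma inVt (V : finType) (s w : V) : (w \in Vt s) = (w != s).
Proof. by rewrite /Vt !inE. Qed.

Lemma PF_ext (V : finType) (mult : V -> V -> nat) s (A : {set V}) (f g : V -> int) :
  is_PF mult s A f -> {in A, f =1 g} -> is_PF mult s A g.
Proof.
move=> [H1 H2] E; split; first by move=> v vA; rewrite -E //; apply: H1.
move=> S SA S0; have [v vS Hv] := H2 S SA S0.
by exists v => //; rewrite -E //; apply: (subsetP SA).
Qed.

Lemma PF_restrict (V : finType) (mult : V -> V -> nat) s (A : {set V}) (p : V -> int) :
  is_PF mult s (Vt s) p -> A \subset Vt s ->
  (forall v w, v \in A -> w \in Vt s -> w \notin A -> mult v w = 0%N) ->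
  is_PF mult s A p.
Proof.
move=> [H1 H2] AV Hm; split; first by move=> v vA; apply: H1; apply: (subsetP AV).
move=> S SA S0.
have [v vS Hv] := H2 S (subset_trans SA AV) S0.
exists v => //; rewrite -(@deg_eq _ _ ((s |: Vt s) :\: S)) //.
move=> w; have vA := subsetP SA v vS.
case: (eqVneq w s) => [->|ws].
  by rewrite !inE eqxx /= eqxx.
case wS: (w \in S); first by rewrite !inE wS.
case wA: (w \in A).
  by rewrite !inE wS wA ws /= eqxx.
by move=> _; apply: Hm => //; rewrite ?inVt ?wA.
Qed.

Theorem proposition2p3 (V : finType) (mult : V -> V -> nat) (s : V) :
  is_multigraph mult -> connected_graph mult ->
  (connected_without mult s -> is_PPF mult s (fun _ => 1)) /\
  (~ connected_without mult s -> forall p : V -> int, ~ is_PPF mult s p).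
Proof.
move=> [Msym Mdiag] Hconn; split.
  move=> Hcw; split.
    split => // S SV S0.
    have [x xS] := set0Pn S S0.
    have sS : s \notin S by apply/negP => /(subsetP SV); rewrite inVt eqxx.
    have [a [b [aS bS ab]]] := @cross _ _ S _ _ (Hconn x s) xS sS.
    exists a => //.
    have := @deg_ge _ mult ((s |: Vt s) :\: S) a b.
    rewrite !inE bS orbN /= => /(_ isT).
    rewrite /adj in ab; lia.
  move=> [A [B [A0 B0 /andP[dAB /eqP UAB] _ [HB1 _]]]].
  have [a aA] := set0Pn A A0; have [b bB] := set0Pn B B0.
  have aV : a \in Vt s by rewrite -UAB inE aA.
  have bV : b \in Vt s by rewrite -UAB inE bB orbT.
  rewrite inVt in aV; rewrite inVt in bV.
  have aB : a \notin B by rewrite (disjointFr dAB aA).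
  have [x [y [xB yB /and3P[xs ys xy]]]] := @cross _ _ B _ _ (Hcw b a bV aV) bB aB.
  have yA : y \in A.
    by move: ys; rewrite -inVt -UAB inE (negbTE yB) orbF.
  have := @deg_ge _ mult A x y yA.
  have := HB1 x xB; rewrite /adj in xy; lia.
move=> Hncw p [[H1 H2] Hnd]; apply: Hnd.
pose e := fun x y => [&& x != s, y != s & adj mult x y].
have [u [v [us vs nuv]]] : exists u v, [/\ u != s, v != s & ~~ connect e u v].
  case: (boolP [exists u, exists v, [&& u != s, v != s & ~~ connect e u v]]).
    by move/existsP=> [u /existsP[v /and3P[? ? ?]]]; exists u, v.
  move=> Hn; exfalso; apply: Hncw => u v us vs; apply: contraNT Hn => Hc.
  by apply/existsP; exists u; apply/existsP; exists v; rewrite us vs Hc.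
pose A := [set x | (x != s) && connect e u x].
pose B := Vt s :\: A.
have AV : A \subset Vt s by apply/subsetP => x; rewrite !inE => /andP[].
have noedge : forall x y, x \in A -> y \in Vt s -> y \notin A -> mult x y = 0%N.
  move=> x y xA yV yA; apply/eqP; rewrite -leqn0 leqNgt; apply/negP => Hm.
  move: yA; rewrite inE -inVt yV /=; apply/negP/negPn.
  move: xA; rewrite inE => /andP[xs cux].
  apply: (connect_trans cux); apply: connect1; rewrite /e xs -inVt yV.
  exact: Hm.
have PF : is_PF mult s (Vt s) p by split.
exists A, B; split.
- by apply/set0Pn; exists u; rewrite inE us connect0.
- by apply/set0Pn; exists v; rewrite !inE vs /= andbT.
- apply/andP; split.
    by rewrite /B disjoints_subset setCD subsetUr.
  by apply/eqP/setP => x; rewrite /B !inE; case: (x != s); case: (connect e u x).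
- exact: PF_restrict.
- apply: (@PF_ext _ _ _ _ p).
    apply: PF_restrict => //; first by rewrite /B subsetDl.
    move=> x y xB yV yB.
    have yA : y \in A by move: yB; rewrite !inE -inVt yV andbT negbK.
    rewrite Msym; apply: noedge => //.
      by move: xB; rewrite inE => /andP[].
    by move: xB; rewrite inE => /andP[].
  move=> x xB; rewrite (@deg_eq _ _ A set0).
    by rewrite /deg_to big_set0 subr0.
  move=> w; rewrite in_set0; case wA: (w \in A) => // _.
  move: xB; rewrite /B in_setD => /andP[xnA xV].
  by rewrite Msym; apply: noedge.
Qed.
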